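(* Let $l\ge 0$ and $k\ge 1$ be integers, $n=k+l$, $e=2^l$, and $p\in[0,1]$ with $q=1-p$. Let $\mathcal{V}=\{\mathbf{r}=(r_0,\dots,r_n)\in\mathbb{Z}_{\ge 0}^{n+1}: \sum_{j=0}^n r_j=e\}$ (the set of ''possible rows''), and for $\mathbf{r}\in\mathcal{V}$ put $\pi(\mathbf{r})=\sum_{j=0}^n r_j\,p^{j}q^{n-j}$ and $f(\mathbf{r})=-\pi(\mathbf{r})\log_2\pi(\mathbf{r})$. Let $V^*(l,k,p)$ be the optimal value of the linear program $$\text{maximize } \sum_{\mathbf{r}\in\mathcal{V}} f(\mathbf{r})\,x_{\mathbf{r}}\quad\text{subject to}\quad \sum_{\mathbf{r}\in\mathcal{V}} r_j\,x_{\mathbf{r}}=\binom{n}{j}\ (j=0,\dots,n),\qquad x_{\mathbf{r}}\ge 0\ (\mathbf{r}\in\mathcal{V}).$$ Then for every binning code $\mathcal{B}_1,\dots,\mathcal{B}_{2^k}$ (a partition of $\{0,1\}^n$ into $2^k$ bins, each of size $2^l$), used over the wiretap channel with noiseless main channel and BSC($p$) wiretap channel as described in the context, the eavesdropper's equivocation satisfies $H(M\mid Z^n)\le V^*(l,k,p)$.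
   Context: Wiretap model: a message $M$ is uniform on $\{1,\dots,2^k\}$; the encoder maps message $i$ to a codeword $X^n$ chosen uniformly at random from bin $\mathcal{B}_i$ (so $X^n$ is uniform on $\{0,1\}^n$). The legitimate receiver observes $X^n$ exactly; the eavesdropper observes $Z^n$, the output of a binary symmetric channel with crossover probability $p$ applied to $X^n$. For an observation $z^n$, $P(x^n\mid z^n)=p^{d_H(x^n,z^n)}q^{n-d_H(x^n,z^n)}$ ($d_H$ = Hamming distance), $P_{\mathcal{B}_i}(z^n)=\sum_{x^n\in\mathcal{B}_i}P(x^n\mid z^n)$, $H(M\mid Z^n=z^n)=-\sum_{i=1}^{2^k}P_{\mathcal{B}_i}(z^n)\log_2 P_{\mathcal{B}_i}(z^n)$, and the (total) equivocation is $H(M\mid Z^n)=2^{-n}\sum_{z^n\in\{0,1\}^n}H(M\mid Z^n=z^n)$. Convention $0\log_2 0=0$. *)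

(* Defs.v *)
From HB Require Import structures.
From mathcomp Require Import all_boot all_order all_algebra.
From mathcomp Require Import all_classical all_reals.
From mathcomp Require Import exp.
Set Implicit Arguments. Unset Strict Implicit. Unset Printing Implicit Defensive.
Import Order.TTheory GRing.Theory Num.Theory.
Local Open Scope ring_scope.

Section Wiretap.
Variable R : realType.

Definition xlog2 (y : R) : R := if y == 0 then 0 else y * (ln y / ln 2).

Definition word (n : nat) := {ffun 'I_n -> bool}.

Definition hamming (n : nat) (x z : word n) : nat := #|[set i | x i != z i]|.

Definition Pxz (p : R) (n : nat) (x z : word n) : R :=
  p ^+ hamming x z * (1 - p) ^+ (n - hamming x z).

Definition Pbin (p : R) (n : nat) (A : {set word n}) (z : word n) : R :=
  \sum_(x in A) Pxz p x z.

Definition Hcond (p : R) (k n : nat) (B : 'I_(2 ^ k) -> {set word n}) (z : word n) : R :=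
  - \sum_(i : 'I_(2 ^ k)) xlog2 (Pbin p (B i) z).

Definition equivocation (p : R) (k n : nat) (B : 'I_(2 ^ k) -> {set word n}) : R :=
  (2 ^+ n)^-1 * \sum_(z : word n) Hcond p B z.

Definition binning_code (k l : nat) (B : 'I_(2 ^ k) -> {set word (k + l)}) : Prop :=
  [/\ forall i, #|B i| = (2 ^ l)%N,
      forall i j, i != j -> [disjoint B i & B j]
    & forall x, exists i, x \in B i].

(* candidate rows: (r_0..r_n) with entries in [0, e]; valid iff sum = e = 2^l *)
Definition rowT (l k : nat) := {ffun 'I_(k + l).+1 -> 'I_(2 ^ l).+1}.

Definition row_ok (l k : nat) (r : rowT l k) : bool :=
  (\sum_(j : 'I_(k + l).+1) (r j : nat) == 2 ^ l)%N.

Definition pi_row (l k : nat) (p : R) (r : rowT l k) : R :=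
  \sum_(j : 'I_(k + l).+1) (r j : nat)%:R * p ^+ j * (1 - p) ^+ (k + l - j).

Definition f_row (l k : nat) (p : R) (r : rowT l k) : R := - xlog2 (pi_row p r).

Definition LP_feasible (l k : nat) (x : rowT l k -> R) : Prop :=
  (forall j : 'I_(k + l).+1,
     \sum_(r | row_ok r) (r j : nat)%:R * x r = ('C(k + l, j))%:R)
  /\ (forall r, row_ok r -> 0 <= x r).

Definition LP_objective (l k : nat) (p : R) (x : rowT l k -> R) : R :=
  \sum_(r | row_ok r) f_row p r * x r.

Local Open Scope classical_set_scope.
Definition Vstar (l k : nat) (p : R) : R :=
  sup [set LP_objective p x | x in @LP_feasible l k].

End Wiretap.

(* Main.v *)
Require Import Defs.
From HB Require Import structures.
From mathcomp Require Import all_boot all_order all_algebra.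
From mathcomp Require Import all_classical all_reals.
Set Implicit Arguments. Unset Strict Implicit. Unset Printing Implicit Defensive.
Import Order.TTheory GRing.Theory Num.Theory.
Local Open Scope ring_scope.

Lemma hamming_le n (x z : word n) : (hamming x z <= n)%N.
Proof. by rewrite /hamming -[X in (_ <= X)%N](card_ord n) max_card. Qed.

Definition cnt n (A : {set word n}) (z : word n) (j : nat) : nat :=
  #|[set x in A | hamming x z == j]|.

Lemma sum_fiber (R : realType) (U T : finType) (phi : U -> T) (P : pred T) (F : T -> R) :
  (forall u, P (phi u)) ->
  \sum_(t | P t) F t * #|[set u | phi u == t]|%:R = \sum_u F (phi u).
Proof.
move=> HP; rewrite (partition_big phi P) //=.
apply: eq_bigr => t _.
rewrite (eq_bigr (fun _ => F t)); last by move=> u /eqP ->.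
rewrite sumr_const mulr_natr; congr (_ *+ _).
by apply: eq_card => u; rewrite inE.
Qed.

Lemma sum_dist (R : realType) n (A : {set word n}) (z : word n) (g : 'I_n.+1 -> R) :
  \sum_(x in A) g (inord (hamming x z)) = \sum_(j : 'I_n.+1) (cnt A z j)%:R * g j.
Proof.
rewrite (partition_big (fun x => (inord (hamming x z) : 'I_n.+1)) (predT : pred 'I_n.+1)) //=.
apply: eq_bigr => j _.
rewrite (eq_bigr (fun _ => g j)); last by move=> u /andP[_ /eqP ->].
rewrite sumr_const mulr_natl; congr (_ *+ _).
apply: eq_card => x; rewrite !inE unfold_in /=; case: (x \in A) => //=.
apply/eqP/eqP => [<-|H]; first by rewrite inordK // ltnS hamming_le.
by apply: val_inj; rewrite /= inordK // ltnS hamming_le.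
Qed.

Lemma card_dist n (z : word n) (j : nat) :
  #|[set x : word n | hamming x z == j]| = 'C(n, j).
Proof.
pose phi (x : word n) := [set i | x i != z i].
have phi_inj : injective phi.
  move=> x y /setP H; apply/ffunP => i; move: (H i); rewrite !inE.
  by case: (x i); case: (y i); case: (z i).
rewrite -(card_imset _ phi_inj) -[X in 'C(X, _)](card_ord n) -card_draws.
apply: eq_card => A; rewrite !inE.
apply/imsetP/idP => [[x] | HA].
  by rewrite inE => /eqP <- ->.
have E : [set i | [ffun i => if i \in A then ~~ z i else z i] i != z i] = A.
  by apply/setP => i; rewrite !inE ffunE; case: (i \in A); case: (z i).
exists [ffun i => if i \in A then ~~ z i else z i]; last by rewrite /phi E.
by rewrite inE /hamming E.
Qed.
Lemma cnt_sum n (A : {set word n}) z : (\sum_(j : 'I_n.+1) cnt A z j)%N = #|A|.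
Proof.
rewrite -sum1_card (partition_big (fun x => (inord (hamming x z) : 'I_n.+1)) (predT : pred 'I_n.+1)) //=.
apply: eq_bigr => j _; rewrite sum1_card.
apply: eq_card => x; rewrite /cnt [RHS]unfold_in /= !inE; case: (x \in A) => //=.
apply/eqP/eqP => [H|<-]; last by rewrite inordK // ltnS hamming_le.
by apply: val_inj; rewrite /= inordK // ltnS hamming_le.
Qed.

Definition rowof (l k : nat) (B : 'I_(2 ^ k) -> {set word (k + l)})
  (u : word (k + l) * 'I_(2 ^ k)) : rowT l k :=
  [ffun j : 'I_(k + l).+1 => inord (cnt (B u.2) u.1 j)].

Lemma rowofE l k B u j : binning_code B -> (@rowof l k B u j : nat) = cnt (B u.2) u.1 j.
Proof.
case=> Hc _ _; rewrite ffunE inordK // ltnS -(Hc u.2).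
by rewrite /cnt setIdE subset_leq_card // subsetIl.
Qed.

Lemma rowof_ok l k B u : binning_code B -> row_ok (@rowof l k B u).
Proof.
move=> hB; rewrite /row_ok (eq_bigr (fun j : 'I_(k + l).+1 => cnt (B u.2) u.1 j)); last by move=> j _; rewrite rowofE.
by rewrite cnt_sum; case: hB => ->.
Qed.

Lemma pi_rowof (R : realType) (p : R) l k B u : binning_code B ->
  pi_row p (@rowof l k B u) = Pbin p (B u.2) u.1.
Proof.
move=> hB; rewrite /Pbin /Pxz.
rewrite (eq_bigr (fun x => (fun j : 'I_(k + l).+1 => p ^+ j * (1 - p) ^+ (k + l - j)) (inord (hamming x u.1)))); last first.
  by move=> x _ /=; rewrite inordK // ltnS hamming_le.
rewrite (sum_dist _ _ (fun j : 'I_(k + l).+1 => p ^+ j * (1 - p) ^+ (k + l - j))); apply: eq_bigr => j _; by rewrite rowofE // mulrA.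
Qed.

Lemma partition_cnt l k (B : 'I_(2 ^ k) -> {set word (k + l)}) z j : binning_code B ->
  (\sum_(i : 'I_(2 ^ k)) cnt (B i) z j)%N = 'C(k + l, j).
Proof.
case=> Hc Hd Hcov; have [b hb] := fin_all_exists Hcov.
have inB : forall x i, (x \in B i) = (b x == i).
  move=> x i; apply/idP/eqP => [xi|<-] //.
  apply/eqP; apply: contraT => ne.
  by move: (disjointFr (Hd _ _ ne) (hb x)); rewrite xi.
rewrite -(card_dist z j) -sum1_card (partition_big b (predT : pred 'I_(2 ^ k))) //=.
apply: eq_bigr => i _; rewrite sum1_card; apply: eq_card => x.
by rewrite [RHS]unfold_in /= !inE inB andbC.
Qed.

Lemma card_word n : #|{: word n}| = (2 ^ n)%N.
Proof. by rewrite card_ffun card_bool card_ord. Qed.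

Unset Implicit Arguments.

Theorem lemma1 (R : realType) (l k : nat) (hk : (1 <= k)%N)
  (p : R) (hp0 : 0 <= p) (hp1 : p <= 1)
  (B : 'I_(2 ^ k) -> {set word (k + l)}) (hB : binning_code B) :
  equivocation p B <= Vstar l k p.
Proof.
set n := (k + l)%N.
have n2 : (2 : R) ^+ n != 0 by rewrite expf_neq0 // pnatr_eq0.
pose xs (r : rowT l k) : R := (2 ^+ n)^-1 * #|[set u | rowof B u == r]|%:R.
have feas : LP_feasible xs.
  split; last by move=> r _; rewrite mulr_ge0 // invr_ge0 exprn_ge0.
  move=> j.
  rewrite (eq_bigr (fun r : rowT l k => (2 ^+ n)^-1 * ((r j : nat)%:R * #|[set u | rowof B u == r]|%:R))); last first.
    by move=> r _; rewrite /xs mulrCA.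
  rewrite -mulr_sumr (sum_fiber (fun r : rowT l k => (r j : nat)%:R : R)); last by move=> u; exact: rowof_ok.
  rewrite -(pair_bigA _ (fun z i => ((rowof B (z, i) j : nat)%:R : R))) /=.
  rewrite (eq_bigr (fun _ => ('C(n, j))%:R)); last first.
    move=> z _; rewrite -natr_sum; congr (_%:R).
    rewrite -(partition_cnt z j hB); apply: eq_bigr => i _; by rewrite rowofE.
  by rewrite sumr_const card_word -[X in _ * X]mulr_natr natrX mulrCA mulVf // mulr1.
have objE : LP_objective p xs = equivocation p B.
  rewrite /LP_objective (eq_bigr (fun r : rowT l k => (2 ^+ n)^-1 * (f_row p r * #|[set u | rowof B u == r]|%:R))); last first.
    by move=> r _; rewrite /xs mulrCA.
  rewrite -mulr_sumr (sum_fiber (f_row p)); last by move=> u; exact: rowof_ok.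
  rewrite /equivocation; congr (_ * _).
  rewrite -(pair_bigA _ (fun z i => f_row p (rowof B (z, i)))) /=.
  apply: eq_bigr => z _; rewrite /Hcond -sumrN; apply: eq_bigr => i _.
  by rewrite /f_row pi_rowof.
pose K' : R := \sum_(j : 'I_n.+1) ('C(n, j))%:R.
pose K : R := \sum_(r : rowT l k | row_ok r) `|f_row p r| * K'.
have ub : forall x : rowT l k -> R, LP_feasible x -> LP_objective p x <= K.
  move=> x [Hc Hnn]; rewrite /LP_objective; apply: ler_sum => r ok.
  have xr : x r <= K'.
    apply: (@le_trans _ _ ((\sum_(j : 'I_n.+1) ((r j : nat)%:R : R)) * x r)).
      apply: ler_peMl; first exact: Hnn.
      by rewrite -natr_sum (eqP ok) natrX exprn_ege1 // ler1n.
    rewrite mulr_suml; apply: ler_sum => j _; rewrite -(Hc j).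
    rewrite (bigD1 r) //= lerDl sumr_ge0 // => r' /andP[ok' _].
    by rewrite mulr_ge0 // Hnn.
  apply: (@le_trans _ _ (`|f_row p r| * x r)).
    by apply: ler_wpM2r; [exact: Hnn | exact: ler_norm].
  by apply: ler_wpM2l.
have hs : has_sup [set LP_objective p x | x in @LP_feasible R l k].
  split; first by exists (LP_objective p xs); exists xs.
  by exists K => y [x fx <-]; exact: ub.
rewrite -objE; apply: (sup_upper_bound hs); by exists xs.
Qed.
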